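(* Let $\mathbb{X}$ be a finite-dimensional strictly convex real Banach space and $\mathbb{Y}$ a finite-dimensional smooth real Banach space (both of dimension greater than $1$). Let $T\in\mathbb{L}(\mathbb{X},\mathbb{Y})$ with $\|T\|=1$. Then $T$ is a smooth point of $\mathbb{L}(\mathbb{X},\mathbb{Y})$ if and only if for every $\epsilon>0$, $T$ admits a uniform $\epsilon$-BPB approximation $A\neq T$ which is itself a smooth point of $\mathbb{L}(\mathbb{X},\mathbb{Y})$.
   Context: $\mathbb{L}(\mathbb{X},\mathbb{Y})$ is the space of linear operators with the operator norm; $S_{\mathbb{X}}$ is the unit sphere. $\mathbb{X}$ is strictly convex if every point of $S_{\mathbb{X}}$ is an extreme point of the unit ball. A nonzero element $x$ of a Banach space $\mathbb{Z}$ is a smooth point if there is a unique $f\in\mathbb{Z}^*$ with $\|f\|=1$ and $f(x)=\|x\|$; $\mathbb{Y}$ is smooth if all its nonzero points are smooth. For $T$ with $\|T\|=1$ and fixed $\epsilon>0$, an operator $A\in\mathbb{L}(\mathbb{X},\mathbb{Y})$ with $\|A\|=1$ is a uniform $\epsilon$-BPB approximation of $T$ if there exists $\delta(\epsilon)>0$ such that whenever $x_0\in S_{\mathbb{X}}$ satisfies $\|Tx_0\|>1-\delta(\epsilon)$, there exists $u_0\in S_{\mathbb{X}}$ with $\|Au_0\|=1$, $\|u_0-x_0\|<\epsilon$ and $\|A-T\|<\epsilon$. *)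

(* Defs.v *)
From HB Require Import structures.
From mathcomp Require Import all_boot all_order all_algebra.
From mathcomp Require Import all_classical all_reals all_analysis.
Set Implicit Arguments. Unset Strict Implicit. Unset Printing Implicit Defensive.
Import Order.TTheory GRing.Theory Num.Theory.
Import numFieldNormedType.Exports.
Local Open Scope classical_set_scope.
Local Open Scope ring_scope.

Section Defs.
Variable R : realType.

Definition findim (V : lmodType R) : Prop :=
  exists (n : nat) (e : 'I_n -> V),
    forall x : V, exists c : 'I_n -> R, x = \sum_(i < n) c i *: e i.

Definition dim_gt1 (V : lmodType R) : Prop :=
  ~ (exists v : V, forall x : V, exists c : R, x = c *: v).

Section Normed.
Variable Z : normedModType R.

Definition unit_ball : set Z := [set x | `|x| <= 1].

Definition extreme_point_ball (x : Z) : Prop :=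
  `|x| <= 1 /\
  forall (y z : Z) (t : R), `|y| <= 1 -> `|z| <= 1 -> 0 < t < 1 ->
    x = t *: y + (1 - t) *: z -> y = z.

Definition strictly_convex : Prop :=
  forall x : Z, `|x| = 1 -> extreme_point_ball x.

Definition dual_elt (f : Z -> R) : Prop :=
  (forall (a : R) (x y : Z), f (a *: x + y) = a * f x + f y) /\
  (exists M : R, forall x : Z, `|f x| <= M * `|x|).

Definition dual_norm (f : Z -> R) : R := sup [set `|f x| | x in unit_ball].

Definition norming_functional (z : Z) (f : Z -> R) : Prop :=
  dual_elt f /\ dual_norm f = 1 /\ f z = `|z|.

Definition smooth_point (z : Z) : Prop :=
  z != 0 /\ exists! f : Z -> R, norming_functional z f.

Definition smooth_space : Prop := forall z : Z, z != 0 -> smooth_point z.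
End Normed.

Section Operators.
Variables X Y : normedModType R.

(* elements of L(X,Y), represented as functions X -> Y that are linear *)
Definition is_op (T : X -> Y) : Prop :=
  forall (a : R) (x y : X), T (a *: x + y) = a *: T x + T y.

Definition opnorm (T : X -> Y) : R := sup [set `|T x| | x in unit_ball (Z:=X)].

Definition op_dual_elt (Phi : (X -> Y) -> R) : Prop :=
  (forall (a : R) (A B : X -> Y), is_op A -> is_op B ->
     Phi (fun x => a *: A x + B x) = a * Phi A + Phi B) /\
  (exists M : R, forall A : X -> Y, is_op A -> `|Phi A| <= M * opnorm A).

Definition op_dual_norm (Phi : (X -> Y) -> R) : R :=
  sup [set `|Phi A| | A in [set A : X -> Y | is_op A /\ opnorm A <= 1]].

Definition op_norming_functional (T : X -> Y) (Phi : (X -> Y) -> R) : Prop :=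
  op_dual_elt Phi /\ op_dual_norm Phi = 1 /\ Phi T = opnorm T.

(* smooth point of L(X,Y): nonzero, with a unique norming functional
   (functionals are identified when they agree on L(X,Y)) *)
Definition op_smooth_point (T : X -> Y) : Prop :=
  is_op T /\ (exists x : X, T x != 0) /\
  (exists Phi, op_norming_functional T Phi) /\
  (forall Phi1 Phi2, op_norming_functional T Phi1 ->
     op_norming_functional T Phi2 ->
     forall A : X -> Y, is_op A -> Phi1 A = Phi2 A).

Definition uniform_BPB_approx (T A : X -> Y) (eps : R) : Prop :=
  is_op A /\ opnorm A = 1 /\
  exists delta : R, 0 < delta /\
    forall x0 : X, `|x0| = 1 -> `|T x0| > 1 - delta ->
      exists u0 : X, `|u0| = 1 /\ `|A u0| = 1 /\ `|u0 - x0| < eps /\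
                     opnorm (fun x => A x - T x) < eps.
End Operators.
End Defs.

(* Main.v *)
Require Import Defs.
From HB Require Import structures.
From mathcomp Require Import all_boot all_order all_algebra.
From mathcomp Require Import all_classical all_reals all_analysis.
From mathcomp Require Import ring lra.
Import Order.TTheory GRing.Theory Num.Theory.
Import numFieldNormedType.Exports.
Local Open Scope classical_set_scope.
Local Open Scope ring_scope.
Set Implicit Arguments. Unset Strict Implicit. Unset Printing Implicit Defensive.
Lemma fd_basis (R : realType) (X : normedModType R) : findim X ->
  exists n (e : 'I_n -> X),
    (forall x, exists c : 'I_n -> R, x = \sum_(i < n) c i *: e i) /\
    (forall c : 'I_n -> R, \sum_(i < n) c i *: e i = 0 -> forall i, c i = 0).
Proof.
move=> [n0 [e0 he0]].
pose P n := exists e : 'I_n -> X,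
   forall x, exists c : 'I_n -> R, x = \sum_(i < n) c i *: e i.
have hex : exists n, `[< P n >] by exists n0; apply/asboolP; exists e0.
case: (ex_minnP hex) => n /asboolP [e he] hmin.
exists n, e; split => // c hc j; apply/eqP/negP => /negP cj.
revert e he hmin c hc j cj; case: n => [|m] e he hmin c hc j cj; first by have := ltn_ord j.
have : P m.
  exists (fun k => e (lift j k)) => x.
  have [d ->] := he x.
  exists (fun k => d (lift j k) - d j * c (lift j k) / c j).
  have hej : e j = - \sum_(k < m) (c (lift j k) / c j) *: e (lift j k).
    move: hc; rewrite (bigD1_ord j) //= => /eqP; rewrite addr_eq0 => /eqP h.
    apply: (scalerI cj); rewrite h scalerN scaler_sumr; congr (- _).
    by apply: eq_bigr => k _; rewrite scalerA mulrC divfK.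
  rewrite (bigD1_ord j) //= hej scalerN scaler_sumr -sumrN -big_split /=.
  apply: eq_bigr => k _; rewrite scalerA scalerBl addrC mulrA -scaleNr.
  by rewrite scaleNr.
by move=> /asboolP /hmin; rewrite ltnn.
Qed.
Lemma bounded_setP (R : realType) n (A : set 'rV[R]_n) (M : R) :
  (forall v, A v -> `|v| <= M) -> bounded_set A.
Proof.
move=> h; exists M; split; first by rewrite num_real.
move=> N hN v Av; apply: le_trans (h v Av) _; exact: ltW.
Qed.

Lemma rv_coord_le (R : realType) n (v : 'rV[R]_n) i : `|v ord0 i| <= `|v|.
Proof.
have -> : `|v| = mx_norm v by [].
rewrite mx_normrE.
exact: (le_bigmax _ (fun ij : 'I_1 * 'I_n => `|v ij.1 ij.2|) (ord0, i)).
Qed.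

Lemma cont_sum (R : realType) (T : topologicalType) (V : normedModType R) n
  (F : 'I_n -> T -> V) : (forall i, continuous (F i)) ->
  continuous (fun t => \sum_(i < n) F i t).
Proof.
elim: n F => [|n IH] F hF.
  under eq_fun do rewrite big_ord0; exact: cst_continuous.
under eq_fun do rewrite big_ord_recr /=.
move=> t; apply: continuousD; last exact: hF.
exact: (IH (fun i => F (widen_ord (leqnSn n) i))).
Qed.

Definition phi (R : realType) (X : normedModType R) n (e : 'I_n -> X)
  (v : 'rV[R]_n) : X := \sum_(i < n) v ord0 i *: e i.

Lemma phi_cont (R : realType) (X : normedModType R) n (e : 'I_n -> X) :
  continuous (phi e).
Proof.
rewrite /phi; apply: (@cont_sum R _ X n (fun i (v : 'rV[R]_n) => v ord0 i *: e i)) => i v.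
apply: continuousZr_tmp; exact: coord_continuous.
Qed.

Lemma phiZD (R : realType) (X : normedModType R) n (e : 'I_n -> X) a v w :
  phi e (a *: v + w) = a *: phi e v + phi e w.
Proof.
rewrite /phi scaler_sumr -big_split /=; apply: eq_bigr => i _.
by rewrite !mxE scalerDl scalerA.
Qed.

Lemma phiB (R : realType) (X : normedModType R) n (e : 'I_n -> X) v w :
  phi e (v - w) = phi e v - phi e w.
Proof. by rewrite addrC -scaleN1r phiZD scaleN1r addrC. Qed.

Lemma phiZ (R : realType) (X : normedModType R) n (e : 'I_n -> X) a v :
  phi e (a *: v) = a *: phi e v.
Proof. by rewrite /phi scaler_sumr; apply: eq_bigr => i _; rewrite mxE scalerA. Qed.

Lemma fd_coord (R : realType) (X : normedModType R) : findim X ->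
  exists n (e : 'I_n -> X) (coord : X -> 'rV[R]_n) (K : R), 0 < K /\
   (forall x, phi e (coord x) = x) /\
   (forall v, coord (phi e v) = v) /\
   (forall a x y, coord (a *: x + y) = a *: coord x + coord y) /\
   (forall x, `|coord x| <= K * `|x|).
Proof.
move=> /fd_basis [n [e [hsp hind]]].
have inj0 : forall v, phi e v = 0 -> v = 0.
  move=> v hv; apply/rowP => i; rewrite mxE.
  exact: (hind (fun i => v ord0 i) hv).
have inj : forall v w, phi e v = phi e w -> v = w.
  by move=> v w h; apply/eqP; rewrite -subr_eq0; apply/eqP/inj0; rewrite phiB h subrr.
have hc : forall x, exists v, phi e v = x.
  move=> x; have [c ->] := hsp x; exists (\row_i c i).
  by apply: eq_bigr => i _; rewrite mxE.
pose coord x := projT1 (cid (hc x)).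
have hco : forall x, phi e (coord x) = x by move=> x; exact: (projT2 (cid (hc x))).
have hlin : forall a x y, coord (a *: x + y) = a *: coord x + coord y.
  by move=> a x y; apply: inj; rewrite phiZD !hco.
pose S := [set v : 'rV[R]_n | `|v| = 1].
have normS : forall v, v != 0 -> S (`|v|^-1 *: v).
  move=> v v0; rewrite /S /= normrZ normrV ?unitfE ?normr_eq0 // normr_id mulVf //.
  by rewrite normr_eq0.
case: (pselect (S !=set0)) => [S0 | S0]; last first.
  exists n, e, coord, 1; split => //; split => //; split; first by move=> v; apply: inj; rewrite hco.
  split => // x; have [->|cx] := eqVneq (coord x) 0; first by rewrite normr0 mul1r.
  by exfalso; apply: S0; exists (`|coord x|^-1 *: coord x); exact: normS.
have cS : compact S.
  apply: bounded_closed_compact; first by apply: (@bounded_setP _ _ _ 1) => v ->.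
  have : closed ((fun v : 'rV[R]_n => `|v|) @^-1` [set 1]).
    apply: preimage_closed; last exact: closed_eq.
    by move=> v _; exact: norm_continuous.
  by [].
have hcont : continuous (fun v => `|phi e v|).
  by move=> v; apply: continuous_comp; [exact: phi_cont | exact: norm_continuous].
have [v0 v0S hmin] := EVT_min_rV S0 cS (continuous_subspaceT hcont).
rewrite inE /S /= in v0S.
have m0 : 0 < `|phi e v0|.
  rewrite normr_gt0; apply/negP => /eqP /inj0 h; move: v0S; rewrite h normr0 => /eqP.
  by rewrite eq_sym oner_eq0.
exists n, e, coord, (`|phi e v0|^-1); split; first by rewrite invr_gt0.
split => //; split; first by move=> v; apply: inj; rewrite hco.
split => // x; have [->|cx] := eqVneq (coord x) 0; first by rewrite normr0 mulr_ge0 ?invr_ge0.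
have := hmin _ (mem_set (normS _ cx)); rewrite phiZ hco normrZ normrV ?unitfE ?normr_eq0 // normr_id.
rewrite mulrC ler_pdivlMr ?normr_gt0 // => h.
by rewrite mulrC ler_pdivlMr // mulrC.
Qed.

Lemma op0 (R : realType) (X Y : normedModType R) (B : X -> Y) :
  is_op B -> B 0 = 0.
Proof.
move=> hB; have := hB 1 0 0; rewrite !scale1r addr0 => h.
by apply: (@addrI _ (B 0)); rewrite addr0 -h.
Qed.

Lemma opD (R : realType) (X Y : normedModType R) (B : X -> Y) :
  is_op B -> forall x y, B (x + y) = B x + B y.
Proof. by move=> hB x y; have := hB 1 x y; rewrite !scale1r. Qed.

Lemma opZ (R : realType) (X Y : normedModType R) (B : X -> Y) :
  is_op B -> forall a x, B (a *: x) = a *: B x.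
Proof. by move=> hB a x; rewrite -(addr0 (a *: x)) hB op0 // addr0. Qed.

Lemma opN (R : realType) (X Y : normedModType R) (B : X -> Y) :
  is_op B -> forall x, B (- x) = - B x.
Proof. by move=> hB x; rewrite -scaleN1r opZ // scaleN1r. Qed.

Lemma opB (R : realType) (X Y : normedModType R) (B : X -> Y) :
  is_op B -> forall x y, B (x - y) = B x - B y.
Proof. by move=> hB x y; rewrite opD // opN. Qed.

Lemma op_sum (R : realType) (X Y : normedModType R) (B : X -> Y) n (F : 'I_n -> X) :
  is_op B -> B (\sum_(i < n) F i) = \sum_(i < n) B (F i).
Proof. by move=> hB; apply: (big_morph B (opD hB) (op0 hB)). Qed.

Lemma op_bounded (R : realType) (X Y : normedModType R) (B : X -> Y) :
  findim X -> is_op B -> exists M, 0 <= M /\ forall x, `|B x| <= M * `|x|.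
Proof.
move=> /fd_coord [n [e [coord [K [K0 [hco [_ [_ hK]]]]]]]] hB.
exists (K * \sum_(i < n) `|B (e i)|); split.
  apply: mulr_ge0; [exact: ltW | by apply: sumr_ge0].
move=> x; rewrite -{1}(hco x) /phi op_sum //.
apply: le_trans (ler_norm_sum _ _ _) _.
rewrite mulrAC mulr_sumr; apply: ler_sum => i _.
rewrite opZ // normrZ ler_wpM2r //.
exact: le_trans (rv_coord_le _ _) (hK x).
Qed.

Lemma supb_ub (R : realType) (Z V : normedModType R) (F : Z -> V) M :
  (forall x, `|F x| <= M * `|x|) ->
  forall x, `|x| <= 1 -> `|F x| <= sup [set `|F x| | x in unit_ball (Z:=Z)].
Proof.
move=> hM x hx; apply: ub_le_sup; last by exists x.
exists `|M| => _ [y hy <-]; apply: le_trans (hM y) _.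
apply: le_trans (ler_wpM2r (normr_ge0 _) (ler_norm M)) _.
by rewrite ler_piMr.
Qed.

Lemma supb_le (R : realType) (Z V : normedModType R) (F : Z -> V) k :
  (forall x, `|x| <= 1 -> `|F x| <= k) ->
  sup [set `|F x| | x in unit_ball (Z:=Z)] <= k.
Proof.
move=> hk; apply: ge_sup; first by exists `|F 0|, 0 => //; rewrite /unit_ball /= normr0.
by move=> _ [y hy <-]; exact: hk.
Qed.

Lemma supb_bound (R : realType) (Z V : normedModType R) (F : Z -> V) M :
  (forall x, `|F x| <= M * `|x|) -> (forall (a : R) x, F (a *: x) = a *: F x) ->
  forall x, `|F x| <= sup [set `|F x| | x in unit_ball (Z:=Z)] * `|x|.
Proof.
move=> hM hZ x; have [->|x0] := eqVneq x 0.
  by have := hZ 0 0; rewrite !scale0r => ->; rewrite !normr0 mulr0.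
have nx : 0 < `|x| by rewrite normr_gt0.
have := supb_ub hM (x := `|x|^-1 *: x).
rewrite hZ !normrZ normrV ?unitfE ?normr_eq0 // normr_id mulVf ?normr_eq0 // => /(_ (lexx _)).
by rewrite mulrC ler_pdivrMr.
Qed.

Lemma opn_ub (R : realType) (X Y : normedModType R) (B : X -> Y) :
  findim X -> is_op B -> forall x, `|x| <= 1 -> `|B x| <= opnorm B.
Proof. by move=> fX hB; have [M [_ hM]] := op_bounded fX hB; exact: supb_ub hM. Qed.

Lemma opn_bound (R : realType) (X Y : normedModType R) (B : X -> Y) :
  findim X -> is_op B -> forall x, `|B x| <= opnorm B * `|x|.
Proof.
move=> fX hB; have [M [_ hM]] := op_bounded fX hB.
by apply: supb_bound hM _; exact: opZ.
Qed.

Lemma opn_ge0 (R : realType) (X Y : normedModType R) (B : X -> Y) :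
  findim X -> is_op B -> 0 <= opnorm B.
Proof.
move=> fX hB; apply: le_trans (opn_ub fX hB (x := 0) _); first exact: normr_ge0.
by rewrite normr0.
Qed.

Lemma opn_le (R : realType) (X Y : normedModType R) (B : X -> Y) k :
  (forall x, `|x| <= 1 -> `|B x| <= k) -> opnorm B <= k.
Proof. exact: supb_le. Qed.

Lemma nf_le (R : realType) (Z : normedModType R) (z : Z) g :
  norming_functional z g -> forall y, `|g y| <= `|y|.
Proof.
move=> [[hl [M hM]] [hn _]] y.
have hZ : forall (a : R) x, g (a *: x) = a *: g x.
  move=> a x; have := hl a x 0; rewrite addr0 => ->.
  have := hl 1 0 0; rewrite !scale1r addr0 mul1r => h0.
  have -> : g 0 = 0 by apply: (@addrI _ (g 0)); rewrite addr0 -h0.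
  by rewrite addr0.
have := supb_bound hM hZ y.
by rewrite /dual_norm in hn; rewrite hn mul1r.
Qed.

Lemma is_op_comb (R : realType) (X Y : normedModType R) (A B : X -> Y) (a : R) :
  is_op A -> is_op B -> is_op (fun x => a *: A x + B x).
Proof.
move=> hA hB c x y; rewrite hA hB scalerDr !scalerA (mulrC a c) -!scalerA.
by rewrite scalerDr addrACA.
Qed.

Lemma is_op0 (R : realType) (X Y : normedModType R) : is_op (fun _ : X => (0 : Y)).
Proof. by move=> a x y; rewrite scaler0 addr0. Qed.

Lemma is_op_rank1 (R : realType) (X Y : normedModType R) (f : X -> R) (y : Y) :
  (forall a x x', f (a *: x + x') = a * f x + f x') ->
  is_op (fun x => f x *: y).
Proof. by move=> hf a x x'; rewrite hf scalerDl scalerA. Qed.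

Lemma Phi0 (R : realType) (X Y : normedModType R) (Phi : (X -> Y) -> R) :
  op_dual_elt Phi -> Phi (fun _ => 0) = 0.
Proof.
move=> [hl _]; have := hl 1 _ _ (@is_op0 R X Y) (@is_op0 R X Y).
have -> : (fun x : X => 1 *: (0 : Y) + 0) = (fun _ => 0).
  by apply: funext => x; rewrite scaler0 addr0.
rewrite mul1r => h; by apply: (@addrI _ (Phi (fun _ => 0))); rewrite addr0 -h.
Qed.

Lemma PhiZ (R : realType) (X Y : normedModType R) (Phi : (X -> Y) -> R) A a :
  op_dual_elt Phi -> is_op A -> Phi (fun x => a *: A x) = a * Phi A.
Proof.
move=> hP hA; have := hP.1 a _ _ hA (@is_op0 R X Y).
have -> : (fun x : X => a *: A x + 0) = (fun x => a *: A x).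
  by apply: funext => x; rewrite addr0.
by rewrite Phi0 // addr0.
Qed.

Lemma PhiD (R : realType) (X Y : normedModType R) (Phi : (X -> Y) -> R) A B :
  op_dual_elt Phi -> is_op A -> is_op B -> Phi (fun x => A x + B x) = Phi A + Phi B.
Proof.
move=> hP hA hB; have := hP.1 1 _ _ hA hB.
have -> : (fun x : X => 1 *: A x + B x) = (fun x => A x + B x).
  by apply: funext => x; rewrite scale1r.
by rewrite mul1r.
Qed.

Lemma Phi_le (R : realType) (X Y : normedModType R) (Phi : (X -> Y) -> R) k :
  (forall A, is_op A -> opnorm A <= 1 -> `|Phi A| <= k) -> op_dual_norm Phi <= k.
Proof.
move=> hk; apply: ge_sup.
  exists `|Phi (fun _ => 0)|, (fun _ => 0) => //; split; first exact: is_op0.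
  by apply: opn_le => x _; rewrite normr0.
by move=> _ [A [hA hA1] <-]; exact: hk.
Qed.

Lemma Phi_ub (R : realType) (X Y : normedModType R) (Phi : (X -> Y) -> R) :
  findim X -> op_dual_elt Phi ->
  forall A, is_op A -> opnorm A <= 1 -> `|Phi A| <= op_dual_norm Phi.
Proof.
move=> fX [hl [M hM]] A hA hA1; apply: ub_le_sup; last by exists A.
exists `|M| => _ [B [hB hB1] <-]; apply: le_trans (hM B hB) _.
apply: le_trans (ler_wpM2r (opn_ge0 fX hB) (ler_norm M)) _.
by rewrite ler_piMr.
Qed.

Lemma Phi_norm (R : realType) (X Y : normedModType R) (Phi : (X -> Y) -> R) :
  findim X -> op_dual_elt Phi -> op_dual_norm Phi = 1 ->
  forall C, is_op C -> `|Phi C| <= opnorm C.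
Proof.
move=> fX hP hn C hC.
have o0 := opn_ge0 fX hC.
have [oz|opos] := eqVneq (opnorm C) 0.
  have [M hM] := hP.2; apply: le_trans (hM C hC) _; by rewrite oz mulr0.
have op : 0 < opnorm C by rewrite lt_neqAle eq_sym opos.
have hC' : is_op (fun x => (opnorm C)^-1 *: C x).
  have := is_op_comb ((opnorm C)^-1) hC (@is_op0 R X Y).
  have -> : (fun x : X => (opnorm C)^-1 *: C x + 0) = (fun x => (opnorm C)^-1 *: C x).
    by apply: funext => x; rewrite addr0.
  by [].
have := Phi_ub fX hP hC'; rewrite hn (@PhiZ _ _ _ Phi C _ hP hC) normrM ger0_norm ?invr_ge0 //.
rewrite mulrC ler_pdivrMr // mul1r; apply.
apply: opn_le => x hx; rewrite normrZ ger0_norm ?invr_ge0 // mulrC ler_pdivrMr // mul1r.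
exact: opn_ub.
Qed.

Lemma phi_op (R : realType) (X Y : normedModType R) (B : X -> Y) n (e : 'I_n -> X) v :
  is_op B -> B (phi e v) = phi (fun i => B (e i)) v.
Proof. by move=> hB; rewrite /phi op_sum //; apply: eq_bigr => i _; rewrite opZ. Qed.

Lemma fd_max (R : realType) (X Y : normedModType R) (B : X -> Y) (P : set X) :
  findim X -> is_op B -> closed P -> (forall x, P x -> `|x| <= 1) -> P !=set0 ->
  exists2 x, P x & forall y, P y -> `|B y| <= `|B x|.
Proof.
move=> /fd_coord [n [e [coord [K [K0 [hco [hcov [_ hK]]]]]]]] hB cP P1 [p Pp].
pose C := [set v : 'rV[R]_n | `|v| <= K /\ P (phi e v)].
have cC : compact C.
  apply: bounded_closed_compact; first by apply: (@bounded_setP _ _ _ K) => v [].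
  apply: closedI.
    have : closed ((fun v : 'rV[R]_n => `|v|) @^-1` [set x | x <= K]).
      apply: preimage_closed; last exact: closed_le.
      by move=> v _; exact: norm_continuous.
    by [].
  have : closed (phi e @^-1` P).
    by apply: preimage_closed => // v _; exact: phi_cont.
  by [].
have C0 : C !=set0.
  exists (coord p); split; last by rewrite hco.
  by apply: le_trans (hK p) _; rewrite ler_piMr ?(P1 _ Pp) // ltW.
have hcont : continuous (fun v => `|B (phi e v)|).
  move=> v; apply: continuous_comp; last exact: norm_continuous.
  have -> : (fun v => B (phi e v)) = phi (fun i => B (e i)).
    by apply: funext => w; exact: phi_op.
  exact: phi_cont.
have [v vC hmax] := EVT_max_rV C0 cC (continuous_subspaceT hcont).
rewrite inE in vC; exists (phi e v); first by case: vC.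
move=> y Py; have := hmax (coord y); rewrite hco; apply; rewrite inE; split.
  by apply: le_trans (hK y) _; rewrite ler_piMr ?(P1 _ Py) // ltW.
by rewrite hco.
Qed.

Lemma closed_ball1 (R : realType) (X : normedModType R) :
  closed [set x : X | `|x| <= 1].
Proof.
have : closed ((fun x : X => `|x|) @^-1` [set r | r <= 1]).
  apply: preimage_closed; last exact: closed_le.
  by move=> v _; exact: norm_continuous.
by [].
Qed.

Lemma op_att (R : realType) (X Y : normedModType R) (B : X -> Y) :
  findim X -> is_op B -> exists x, `|x| <= 1 /\ `|B x| = opnorm B.
Proof.
move=> fX hB.
have [x Px hx] := fd_max fX hB (@closed_ball1 R X) (fun x h => h)
  (ex_intro _ 0 (eq_ind_r (fun r => r <= 1) ler01 (normr0 X))).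
exists x; split => //; apply/eqP; rewrite eq_le opn_ub //=.
by apply: opn_le => y hy; exact: hx.
Qed.

Lemma closed_distge (R : realType) (X : normedModType R) (c : X) (eta : R) :
  closed [set x : X | eta <= `|x + c|].
Proof.
have hc : continuous (fun x : X => `|x + c|).
  move=> v; apply: (@continuous_comp _ _ _ (fun x : X => x + c) (Num.norm : X -> R)); last exact: norm_continuous.
  by apply: cvgD; [exact: cvg_id | exact: cvg_cst].
have : closed ((fun x : X => `|x + c|) @^-1` [set r | eta <= r]).
  by apply: preimage_closed; [move=> v _; exact: hc | exact: closed_ge].
by [].
Qed.

Lemma gap (R : realType) (X Y : normedModType R) (A : X -> Y) (x0 : X) :
  findim X -> is_op A -> opnorm A = 1 -> `|x0| = 1 ->
  (forall x, `|x| = 1 -> `|A x| = 1 -> x = x0 \/ x = - x0) ->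
  forall eta, 0 < eta -> exists delta, 0 < delta /\
    forall x, `|x| <= 1 -> 1 - delta < `|A x| -> `|x - x0| < eta \/ `|x + x0| < eta.
Proof.
move=> fX hA nA nx0 hM eta eta0.
pose P := [set x : X | `|x| <= 1] `&` ([set x | eta <= `|x + - x0|] `&` [set x | eta <= `|x + x0|]).
have notP : forall x, `|x| <= 1 -> ~ P x -> `|x - x0| < eta \/ `|x + x0| < eta.
  move=> x hx nP; case: (ltP `|x - x0| eta) => h1; first by left.
  case: (ltP `|x + x0| eta) => h2; first by right.
  by exfalso; apply: nP.
have cP : closed P.
  apply: closedI; first exact: closed_ball1.
  by apply: closedI; apply: closed_distge.
case: (pselect (P !=set0)) => [P0|P0]; last first.
  exists 1; split => // x hx _; apply: notP => // Px; apply: P0; by exists x.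
have [xs Pxs hmax] := fd_max fX hA cP (fun x h => h.1) P0.
have hxs : `|A xs| < 1.
  rewrite lt_neqAle; apply/andP; split; last by rewrite -nA; apply: opn_ub => //; exact: Pxs.1.
  apply/eqP => h1.
  have n1 : `|xs| = 1.
    apply/eqP; rewrite eq_le Pxs.1 /=.
    by have := opn_bound fX hA xs; rewrite nA mul1r h1.
  case: Pxs => _ [h2 h3]; case: (hM xs n1 h1) => hx; rewrite hx in h2 h3.
    by move: h2; rewrite /= subrr normr0 leNgt eta0.
  by move: h3; rewrite /= addNr normr0 leNgt eta0.
exists (1 - `|A xs|); split; first by rewrite subr_gt0.
move=> x hx hAx; apply: notP => // Px.
by move: (hmax x Px); rewrite leNgt; move: hAx; rewrite opprB addrCA subrr addr0 => ->.
Qed.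

Lemma sep (R : realType) (X : normedModType R) : findim X ->
  forall u0 u1 : X, (forall a b : R, a *: u0 + b *: u1 = 0 -> a = 0 /\ b = 0) ->
  exists h : X -> R, (forall a x y, h (a *: x + y) = a * h x + h y) /\
    h u0 = 0 /\ h u1 != 0.
Proof.
move=> /fd_coord [n [e [coord [K [K0 [hco [hcov [hlin hK]]]]]]]] u0 u1 hind.
pose a := coord u0; pose b := coord u1.
have [[i [j hij]] | hno] := pselect (exists i j, a ord0 i * b ord0 j - a ord0 j * b ord0 i != 0).
  exists (fun x => a ord0 i * coord x ord0 j - a ord0 j * coord x ord0 i); split.
    move=> c x y; rewrite hlin !mxE; ring.
  by split => //; rewrite /a; ring.
exfalso.
have hall : forall i j, a ord0 i * b ord0 j = a ord0 j * b ord0 i.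
  move=> i j; apply/eqP; rewrite -subr_eq0; apply/negP => /negP h.
  by apply: hno; exists i, j.
have [[i ai] | a0] := pselect (exists i, a ord0 i != 0).
  pose k := b ord0 i / a ord0 i.
  have hb : b = k *: a.
    apply/rowP => j; rewrite mxE /k; apply: (mulfI ai); rewrite hall; field.
    exact: ai.
  have : k *: u0 + (-1) *: u1 = 0.
    have hu1 : u1 = k *: u0 by rewrite -(hco u1) -/b hb phiZ hco.
    by rewrite hu1 scaleN1r addrN.
  by move=> /hind [_ /eqP]; rewrite oppr_eq0 oner_eq0.
have : 1 *: u0 + 0 *: u1 = 0.
  rewrite scale0r addr0 scale1r -(hco u0) -/a.
  have -> : a = 0 by apply/rowP => i; rewrite mxE; apply/eqP/negP => /negP h; apply: a0; exists i.
  by rewrite /phi big1 // => l _; rewrite mxE scale0r.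
by move=> /hind [/eqP]; rewrite oner_eq0.
Qed.

Lemma dual0 (R : realType) (Z : normedModType R) (g : Z -> R) :
  (forall a x y, g (a *: x + y) = a * g x + g y) -> g 0 = 0.
Proof.
move=> hl; have := hl 1 0 0; rewrite scale1r addr0 mul1r => h0.
by apply: (@addrI _ (g 0)); rewrite addr0 -h0.
Qed.

Lemma dualZ (R : realType) (Z : normedModType R) (g : Z -> R) :
  (forall a x y, g (a *: x + y) = a * g x + g y) -> forall a x, g (a *: x) = a * g x.
Proof. by move=> hl a x; have := hl a x 0; rewrite addr0 dual0 // addr0. Qed.

Lemma dualD (R : realType) (Z : normedModType R) (g : Z -> R) :
  (forall a x y, g (a *: x + y) = a * g x + g y) -> forall x y, g (x + y) = g x + g y.
Proof. by move=> hl x y; have := hl 1 x y; rewrite scale1r mul1r. Qed.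

Lemma norming_eval (R : realType) (X Y : normedModType R) (A : X -> Y) u g :
  findim X -> is_op A -> opnorm A = 1 -> `|u| <= 1 -> `|A u| = 1 ->
  norming_functional (A u) g ->
  op_norming_functional A (fun B => g (B u)).
Proof.
move=> fX hA nA u1 Au1 hg.
have hgl := hg.1.1.
have gle := nf_le hg.
have bnd : forall B, is_op B -> `|g (B u)| <= opnorm B.
  move=> B hB; apply: le_trans (gle _) _; apply: le_trans (opn_bound fX hB u) _.
  by rewrite ler_piMr // opn_ge0.
have dA : g (A u) = 1 by rewrite hg.2.2 Au1.
split; first split.
- by move=> a A' B' _ _; rewrite hgl.
- by exists 1 => B hB; rewrite mul1r; exact: bnd.
split; last by rewrite dA nA.
apply/eqP; rewrite eq_le; apply/andP; split.
  by apply: Phi_le => B hB hB1; exact: le_trans (bnd B hB) hB1.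
have hP : op_dual_elt (fun B => g (B u)).
  split; first by move=> a A' B' _ _; rewrite hgl.
  by exists 1 => B hB; rewrite mul1r; exact: bnd.
have := Phi_ub fX hP hA; rewrite nA lexx dA normr1; exact.
Qed.

Lemma norm1_pm (R : realType) (c : R) : `|c| = 1 -> c = 1 \/ c = -1.
Proof.
case: (ler0P c) => hc h.
  by right; rewrite -h opprK.
by left.
Qed.

Lemma att_pm (R : realType) (X Y : normedModType R) (A : X -> Y) (u0 u1 : X) :
  findim X -> smooth_space Y -> op_smooth_point A -> opnorm A = 1 ->
  `|u0| = 1 -> `|A u0| = 1 -> `|u1| = 1 -> `|A u1| = 1 -> u1 = u0 \/ u1 = - u0.
Proof.
move=> fX smY [hA [_ [_ huniq]]] nA n0 An0 n1 An1.
have ne : forall u, `|A u| = 1 -> A u != 0.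
  by move=> u h; apply/eqP => h0; move: h; rewrite h0 normr0 => /eqP; rewrite eq_sym oner_eq0.
have [g0 [hg0 _]] := (smY _ (ne _ An0)).2.
have [g1 [hg1 _]] := (smY _ (ne _ An1)).2.
have P0 := norming_eval fX hA nA (eq_ind_r (fun r => r <= 1) (lexx 1) n0) An0 hg0.
have P1 := norming_eval fX hA nA (eq_ind_r (fun r => r <= 1) (lexx 1) n1) An1 hg1.
have heq := huniq _ _ P0 P1.
have [[a [b [hab hnz]]] | hind] :=
  pselect (exists a b : R, a *: u0 + b *: u1 = 0 /\ (a != 0 \/ b != 0)).
  have [b0|bn0] := eqVneq b 0.
    move: hab hnz; rewrite b0 scale0r addr0 => /eqP; rewrite scaler_eq0 => /orP [/eqP -> | /eqP hu].
      by case => /eqP.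
    by move: n0; rewrite hu normr0 => /eqP; rewrite eq_sym oner_eq0.
  have hu1 : u1 = (- (a / b)) *: u0.
    apply: (scalerI bn0); rewrite scalerA mulrN mulrCA mulfV // mulr1 scaleNr.
    by apply/eqP; rewrite -addr_eq0 addrC hab.
  have := n1; rewrite hu1 normrZ n0 mulr1 => /norm1_pm [] ->; rewrite ?scale1r ?scaleN1r; by [left | right].
exfalso.
have hind' : forall a b : R, a *: u0 + b *: u1 = 0 -> a = 0 /\ b = 0.
  move=> a b h; have [a0|an0] := eqVneq a 0; have [b0|bn0] := eqVneq b 0 => //.
  - by exfalso; apply: hind; exists a, b; split => //; right.
  - by exfalso; apply: hind; exists a, b; split => //; left.
  - by exfalso; apply: hind; exists a, b; split => //; left.
have [h [hl [h0 h1]]] := sep fX hind'.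
have hdl := hg1.1.1.
have := heq (fun x => h x *: A u1) (is_op_rank1 _ hl).
rewrite /= h0 scale0r dual0; last exact: hg0.1.1.
rewrite dualZ // hg1.2.2 An1 mulr1 => /esym/eqP; rewrite (negbTE h1) //.
Qed.

Lemma is_opZ (R : realType) (X Y : normedModType R) (B : X -> Y) (a : R) :
  is_op B -> is_op (fun x => a *: B x).
Proof.
move=> hB; have := is_op_comb a hB (@is_op0 R X Y).
have -> : (fun x : X => a *: B x + 0) = (fun x => a *: B x).
  by apply: funext => x; rewrite addr0.
by [].
Qed.

Lemma kill (R : realType) (X Y : normedModType R) (A : X -> Y) (x0 : X) Phi :
  findim X -> is_op A -> opnorm A = 1 -> `|x0| = 1 ->
  (forall x, `|x| = 1 -> `|A x| = 1 -> x = x0 \/ x = - x0) ->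
  op_norming_functional A Phi ->
  forall B, is_op B -> B x0 = 0 -> Phi B = 0.
Proof.
move=> fX hA nA nx0 hM [hP [hn hPA]].
have half : forall B, is_op B -> B x0 = 0 -> Phi B <= 0.
  move=> B hB hB0; have L0 := opn_ge0 fX hB; set L := opnorm B in L0.
  apply/ler_addgt0Pr => e e0; rewrite add0r.
  have L1 : 0 < L + 1 by lra.
  pose eta := e / (L + 1).
  have eta0 : 0 < eta by rewrite divr_gt0.
  have heta : eta * L + eta = e by rewrite /eta -{2}(mulr1 (e / (L + 1))) -mulrDr divfK ?gt_eqF.
  have [d [d0 hd]] := gap fX hA nA nx0 hM eta0.
  pose s := d / (L + 1).
  have s0 : 0 < s by rewrite divr_gt0.
  have hs : s * L + s = d by rewrite /s -{2}(mulr1 (d / (L + 1))) -mulrDr divfK ?gt_eqF.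
  have hC := is_op_comb s hB hA.
  have hPC : Phi (fun x => s *: B x + A x) = s * Phi B + 1.
    by rewrite hP.1 // hPA nA.
  have hBx : forall x, `|B x| <= L * `|x - x0| /\ `|B x| <= L * `|x + x0|.
    move=> x; split.
      by have := opn_bound fX hB (x - x0); rewrite opB // hB0 subr0.
    by have := opn_bound fX hB (x + x0); rewrite opD // hB0 addr0.
  have hCn : opnorm (fun x => s *: B x + A x) <= 1 + s * (L * eta).
    apply: opn_le => x hx.
    have hAx1 : `|A x| <= 1 by rewrite -nA; exact: opn_ub.
    have hBL : `|B x| <= L by have := opn_bound fX hB x; move/le_trans; apply; rewrite ler_piMr.
    apply: le_trans (ler_normD _ _) _; rewrite normrZ gtr0_norm //.
    case: (ltP (1 - d) `|A x|) => hAx.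
      have hBe : `|B x| <= L * eta.
        case: (hd x hx hAx) => h.
          by apply: le_trans (hBx x).1 _; rewrite ler_wpM2l // ltW.
        by apply: le_trans (hBx x).2 _; rewrite ler_wpM2l // ltW.
      have : s * `|B x| <= s * (L * eta) by rewrite ler_wpM2l // ltW.
      lra.
    have : s * `|B x| <= s * L by rewrite ler_wpM2l // ltW.
    have : 0 <= s * (L * eta) by apply: mulr_ge0; [exact: ltW | apply: mulr_ge0 => //; exact: ltW].
    lra.
  have : s * Phi B + 1 <= 1 + s * (L * eta).
    rewrite -hPC; apply: le_trans (ler_norm _) _; apply: le_trans hCn.
    exact: Phi_norm.
  rewrite addrC lerD2l ler_pM2l // => hle.
  have : 0 <= eta * L by rewrite mulr_ge0 // ltW.
  rewrite mulrC in hle; lra.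
move=> B hB hB0; apply/eqP; rewrite eq_le half //=.
have hB' := is_opZ (-1) hB.
have := half _ hB'; rewrite PhiZ // hB0 scaler0 => /(_ erefl).
by rewrite mulN1r oppr_le0.
Qed.

Lemma smooth_crit (R : realType) (X Y : normedModType R) (A : X -> Y) (x0 : X) :
  findim X -> smooth_space Y -> is_op A -> opnorm A = 1 -> `|x0| = 1 -> `|A x0| = 1 ->
  (forall x, `|x| = 1 -> `|A x| = 1 -> x = x0 \/ x = - x0) ->
  op_smooth_point A.
Proof.
move=> fX smY hA nA nx0 nAx0 hM.
have Ax0 : A x0 != 0.
  by apply/eqP => h0; move: nAx0; rewrite h0 normr0 => /eqP; rewrite eq_sym oner_eq0.
have [g [hg guniq]] := (smY _ Ax0).2.
have x01 : `|x0| <= 1 by rewrite nx0.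
have Pg := norming_eval fX hA nA x01 nAx0 hg.
have hgl := hg.1.1.
have gle := nf_le hg.
pose f := fun x => g (A x).
have hf : forall a x y, f (a *: x + y) = a * f x + f y by move=> a x y; rewrite /f hA hgl.
have fx0 : f x0 = 1 by rewrite /f hg.2.2 nAx0.
have fle : forall x, `|f x| <= `|x|.
  move=> x; apply: le_trans (gle _) _; have := opn_bound fX hA x; by rewrite nA mul1r.
suff key : forall Phi, op_norming_functional A Phi -> forall B, is_op B -> Phi B = g (B x0).
  split => //; split; first by exists x0.
  split; first by exists (fun B => g (B x0)).
  by move=> P1 P2 h1 h2 B hB; rewrite (key _ h1 B hB) (key _ h2 B hB).
move=> Phi hN; have [hP [hn hPA]] := hN.
have decomp : forall B, is_op B -> Phi B = Phi (fun x => f x *: B x0).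
  move=> B hB.
  have hD : is_op (fun x => f x *: B x0).
    apply: (@is_op_rank1 R X Y f (B x0)). exact hf.
  have hE : is_op (fun x => B x - f x *: B x0).
    have := is_op_comb (-1) hD hB.
    have -> : (fun x => -1 *: (f x *: B x0) + B x) = (fun x => B x - f x *: B x0).
      by apply: funext => x; rewrite scaleN1r addrC.
    by [].
  rewrite -{1}(_ : (fun x => f x *: B x0 + (B x - f x *: B x0)) = B); last first.
    by apply: funext => x; rewrite addrC subrK.
  rewrite PhiD // (kill fX hA nA nx0 hM hN hE) ?addr0 //.
  by rewrite fx0 scale1r subrr.
pose psi := fun y : Y => Phi (fun x => f x *: y).
have rk1 : forall y : Y, is_op (fun x => f x *: y).
  move=> y; apply: (@is_op_rank1 R X Y f y). exact: hf.
have psil : forall a y y', psi (a *: y + y') = a * psi y + psi y'.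
  move=> a y y'; rewrite /psi -hP.1 //; congr Phi; apply: funext => x.
  by rewrite scalerDr !scalerA mulrC.
have psib : forall y, `|psi y| <= 1 * `|y|.
  move=> y; rewrite mul1r; apply: le_trans (Phi_norm fX hP hn (rk1 y)) _.
  apply: opn_le => x hx; rewrite normrZ; apply: le_trans (ler_wpM2r (normr_ge0 _) (fle x)) _.
  by rewrite ler_piMl.
have psiA : psi (A x0) = 1 by rewrite /psi -decomp // hPA nA.
have hpsi : norming_functional (A x0) psi.
  split; first by split => //; exists 1.
  split; last by rewrite psiA nAx0.
  apply/eqP; rewrite eq_le; apply/andP; split.
    by apply: supb_le => y hy; apply: le_trans (psib y) _; rewrite mul1r.
  have := supb_ub psib (x := A x0); rewrite psiA normr1 nAx0 lexx; exact.
have gpsi := guniq _ hpsi.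
by move=> B hB; rewrite decomp // gpsi.
Qed.

Lemma fwd_bpb (R : realType) (X Y : normedModType R) (T A : X -> Y) (x0 : X) eps :
  findim X -> is_op T -> opnorm T = 1 -> `|x0| = 1 ->
  (forall x, `|x| = 1 -> `|T x| = 1 -> x = x0 \/ x = - x0) ->
  is_op A -> opnorm A = 1 -> `|A x0| = 1 -> opnorm (fun x => A x - T x) < eps ->
  0 < eps -> uniform_BPB_approx T A eps.
Proof.
move=> fX hT nT nx0 hM hA nA nAx0 hAT eps0.
have [d [d0 hd]] := gap fX hT nT nx0 hM eps0.
split => //; split => //; exists d; split => // x hx hTx.
have := hd x (eq_ind_r (fun r => r <= 1) (lexx 1) hx) hTx; case => h.
  by exists x0; split => //; split => //; split => //; rewrite distrC.
exists (- x0); rewrite normrN nx0 opN // normrN nAx0; split => //; split => //; split => //.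
by rewrite -opprD normrN addrC.
Qed.

Lemma att_unit (R : realType) (X Y : normedModType R) (T : X -> Y) :
  findim X -> is_op T -> opnorm T = 1 -> exists x0, `|x0| = 1 /\ `|T x0| = 1.
Proof.
move=> fX hT nT; have [x0 [hx0 hTx0]] := op_att fX hT; rewrite nT in hTx0.
exists x0; split => //; apply/eqP; rewrite eq_le hx0 /=.
by have := opn_bound fX hT x0; rewrite nT mul1r hTx0.
Qed.

Lemma backward (R : realType) (X Y : normedModType R)
  (fdX : findim X) (smY : smooth_space Y) (T : X -> Y) (linT : is_op T) (nT : opnorm T = 1) :
  (forall eps : R, 0 < eps ->
     exists A : X -> Y, A <> T /\ uniform_BPB_approx T A eps /\ op_smooth_point A) ->
  op_smooth_point T.
Proof.
move=> H; have [x0 [nx0 hTx0]] := att_unit fdX linT nT.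
apply: (smooth_crit fdX smY linT nT nx0 hTx0) => x1 n1 T1.
case: (pselect (x1 = x0 \/ x1 = - x0)) => // hneg; exfalso.
have d1 : 0 < `|x1 - x0|.
  by rewrite normr_gt0 subr_eq0; apply/eqP => h; apply: hneg; left.
have d2 : 0 < `|x1 + x0|.
  by rewrite normr_gt0 addr_eq0; apply/eqP => h; apply: hneg; right.
pose eta := Num.min `|x1 - x0| `|x1 + x0|.
have eta1 : eta <= `|x1 - x0| by rewrite ge_min lexx.
have eta2 : eta <= `|x1 + x0| by rewrite ge_min lexx orbT.
have eta0 : 0 < eta by rewrite lt_min d1 d2.
pose eps := eta / 2.
have eps0 : 0 < eps by rewrite divr_gt0.
have heps : eps + eps = eta by rewrite /eps; field.
have [A [_ [[hA [nA [d [d0 hd]]]] sA]]] := H eps eps0.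
have g0 : 1 - d < `|T x0| by rewrite hTx0 ltrBlDr ltrDl.
have g1 : 1 - d < `|T x1| by rewrite T1 ltrBlDr ltrDl.
have [u0 [nu0 [nAu0 [hu0 _]]]] := hd x0 nx0 g0.
have [u1 [nu1 [nAu1 [hu1 _]]]] := hd x1 n1 g1.
case: (att_pm fdX smY sA nA nu0 nAu0 nu1 nAu1) => hu; rewrite hu in hu1.
  have : `|x1 - x0| <= `|u0 - x1| + `|u0 - x0|.
    have -> : x1 - x0 = - (u0 - x1) + (u0 - x0) by rewrite opprB addrA subrK.
    by apply: le_trans (ler_normD _ _) _; rewrite normrN.
  lra.
have : `|x1 + x0| <= `|- u0 - x1| + `|u0 - x0|.
  have -> : x1 + x0 = - (- u0 - x1) - (u0 - x0).
    by rewrite !opprB opprK addrACA subrr addr0.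
  by apply: le_trans (ler_normB _ _) _; rewrite normrN.
lra.
Qed.

Lemma forward (R : realType) (X Y : normedModType R)
  (fdX : findim X) (dY : dim_gt1 Y) (smY : smooth_space Y)
  (T : X -> Y) (linT : is_op T) (nT : opnorm T = 1) :
  op_smooth_point T -> forall eps : R, 0 < eps ->
     exists A : X -> Y, A <> T /\ uniform_BPB_approx T A eps /\ op_smooth_point A.
Proof.
move=> sT eps eps0.
have [x0 [nx0 hTx0]] := att_unit fdX linT nT.
have hM : forall x, `|x| = 1 -> `|T x| = 1 -> x = x0 \/ x = - x0.
  by move=> x n h; exact: (att_pm fdX smY sT nT nx0 hTx0 n h).
have Tx0 : T x0 != 0.
  by apply/eqP => h0; move: hTx0; rewrite h0 normr0 => /eqP; rewrite eq_sym oner_eq0.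
have [g [hg _]] := (smY _ Tx0).2.
have hgl := hg.1.1.
have gle := nf_le hg.
pose f := fun x => g (T x).
have hf : forall a x y, f (a *: x + y) = a * f x + f y by move=> a x y; rewrite /f linT hgl.
have fx0 : f x0 = 1 by rewrite /f hg.2.2 hTx0.
have Tle : forall x, `|T x| <= `|x|.
  by move=> x; have := opn_bound fdX linT x; rewrite nT mul1r.
have fle : forall x, `|f x| <= `|x| by move=> x; exact: le_trans (gle _) (Tle x).
have main : forall A, is_op A -> opnorm A = 1 -> `|A x0| = 1 ->
    opnorm (fun x => A x - T x) < eps ->
    (forall x, `|x| = 1 -> `|A x| = 1 -> `|T x| = 1) ->
    uniform_BPB_approx T A eps /\ op_smooth_point A.
  move=> A hA nA nAx0 hAT hMA; split; first exact: (fwd_bpb fdX linT nT nx0 hM hA nA nAx0 hAT eps0).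
  apply: (smooth_crit fdX smY hA nA nx0 nAx0) => x n h; apply: hM => //; exact: hMA.
case: (pselect (forall x, T x = f x *: T x0)) => [r1 | nr1].
  have [w hw] : exists w : Y, forall c : R, w != c *: T x0.
    case: (pselect (exists w : Y, forall c : R, w != c *: T x0)) => // hno; exfalso.
    apply: dY; exists (T x0) => y.
    case: (pselect (exists c : R, y = c *: T x0)) => // hy; exfalso.
    apply: hno; exists y => c; apply/eqP => e; apply: hy; by exists c.
  have w0 : w != 0 by have := hw 0; rewrite scale0r.
  pose W := `|w|.
  have W0 : 0 < W by rewrite normr_gt0.
  pose m := Num.min 1 eps.
  have m0 : 0 < m by rewrite lt_min ltr01 eps0.
  have m1 : m <= 1 by rewrite ge_min lexx.
  have me : m <= eps by rewrite ge_min lexx orbT.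
  have W8 : 0 < 8 * (W + 1) by apply: mulr_gt0 => //; lra.
  pose s := m / (8 * (W + 1)).
  have s0 : 0 < s by rewrite divr_gt0.
  have hs : s * (8 * (W + 1)) = m by rewrite divfK // gt_eqF.
  have hs' : 8 * (s * W) + 8 * s = m by rewrite -hs; ring.
  pose z := T x0 + s *: w.
  have z0 : z != 0.
    apply/eqP => hz.
    have e2 : w = (- s^-1) *: T x0.
      apply: (scalerI (lt0r_neq0 s0)); rewrite scalerA mulrN mulfV ?gt_eqF // scaleN1r.
      by apply/eqP; rewrite -addr_eq0 addrC; apply/eqP.
    by move: (hw (- s^-1)); rewrite {1}e2 eqxx.
  pose N := `|z|.
  have N0 : 0 < N by rewrite normr_gt0.
  pose y1 := N^-1 *: z.
  have ny1 : `|y1| = 1.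
    by rewrite normrZ normrV ?unitfE ?gt_eqF // normr_id mulVf ?gt_eqF.
  have y1T : y1 != T x0.
    apply/eqP => e.
    have hz : z = N *: T x0 by rewrite -e /y1 scalerA mulfV ?gt_eqF // scale1r.
    have e2 : w = ((N - 1) / s) *: T x0.
      apply: (scalerI (lt0r_neq0 s0)); rewrite scalerA mulrCA mulfV ?gt_eqF // mulr1.
      by rewrite scalerBl scale1r -hz /z addrAC subrr add0r.
    by move: (hw ((N - 1) / s)); rewrite {1}e2 eqxx.
  have hzT : `|z - T x0| = s * W by rewrite /z addrAC subrr add0r normrZ gtr0_norm.
  have hN1 : `|N - 1| <= s * W by rewrite -hTx0 -hzT; exact: ler_dist_dist.
  have key : `|y1 - T x0| * N <= 2 * (s * W).
    have -> : y1 - T x0 = N^-1 *: (z - N *: T x0).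
      by rewrite scalerBr scalerA mulVf ?gt_eqF // scale1r.
    rewrite normrZ normrV ?unitfE ?gt_eqF // normr_id mulrAC mulVf ?gt_eqF // mul1r.
    have -> : z - N *: T x0 = (z - T x0) + (1 - N) *: T x0.
      by rewrite scalerBl scale1r addrA subrK.
    apply: le_trans (ler_normD _ _) _; rewrite normrZ hTx0 mulr1 hzT distrC.
    lra.
  have hNlow : 1 / 2 <= N.
    have := hN1; rewrite ler_norml => /andP [h _].
    have : 0 <= s * W by rewrite mulr_ge0 // ltW.
    lra.
  have hy1 : `|y1 - T x0| <= eps / 2.
    have a0 : 0 <= `|y1 - T x0| by [].
    have : 0 <= s * W by rewrite mulr_ge0 // ltW.
    nra.
  pose A := fun x => f x *: y1.
  have hA : is_op A := @is_op_rank1 R X Y f y1 hf.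
  have AT : forall x, `|A x| = `|T x|.
    by move=> x; rewrite /A normrZ ny1 mulr1 (r1 x) normrZ hTx0 mulr1.
  have nA : opnorm A = 1.
    rewrite -nT /opnorm; congr sup; apply/seteqP; split => _ [x hx <-]; exists x => //; by rewrite AT.
  exists A; split.
    move=> eAT; apply/negP: y1T; apply/negPn/eqP.
    by have := congr1 (fun F => F x0) eAT; rewrite /A /= fx0 scale1r.
  apply: main => //.
  - by rewrite AT.
  - apply: (@le_lt_trans _ _ (eps / 2)); last by lra.
    apply: opn_le => x hx; rewrite /A (r1 x) -scalerBr normrZ.
    apply: le_trans (ler_wpM2r (normr_ge0 _) (le_trans (fle x) hx)) _.
    by rewrite mul1r.
  - by move=> x n h; rewrite -AT.
pose t := Num.min (1 / 2) (eps / 4).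
have t0 : 0 < t by rewrite lt_min divr_gt0 //= divr_gt0.
have t2 : t <= 1 / 2 by rewrite ge_min lexx.
have t4 : t <= eps / 4 by rewrite ge_min lexx orbT.
pose A := fun x => (1 - t) *: T x + (t * f x) *: T x0.
have hft : forall a x y, t * f (a *: x + y) = a * (t * f x) + t * f y.
  by move=> a x y; rewrite hf; ring.
have hA : is_op A.
  exact: (is_op_comb (1 - t) linT (@is_op_rank1 R X Y (fun x => t * f x) (T x0) hft)).
have Ax0 : A x0 = T x0 by rewrite /A fx0 mulr1 -scalerDl subrK scale1r.
have Ale : forall x, `|A x| <= (1 - t) * `|T x| + t * `|x|.
  move=> x; apply: le_trans (ler_normD _ _) _; rewrite !normrZ hTx0 mulr1.
  rewrite ger0_norm; last by lra.
  rewrite lerD2l gtr0_norm // ler_wpM2l // ?ltW //.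
have nA : opnorm A = 1.
  apply/eqP; rewrite eq_le; apply/andP; split.
    apply: opn_le => x hx; apply: le_trans (Ale x) _.
    have := Tle x; have : 0 <= `|T x| by [].
    have : 1 - t >= 0 by lra.
    move=> h1 h2 h3; have : (1 - t) * `|T x| <= (1 - t) * 1.
      by rewrite ler_wpM2l //; apply: le_trans h3 hx.
    have : t * `|x| <= t * 1 by rewrite ler_wpM2l // ltW.
    lra.
  by rewrite -{1}hTx0 -Ax0; apply: opn_ub => //; rewrite nx0.
have hAT : opnorm (fun x => A x - T x) < eps.
  apply: (@le_lt_trans _ _ (2 * t)); last by lra.
  apply: opn_le => x hx.
  have -> : A x - T x = (t * f x) *: T x0 - t *: T x.
    by rewrite /A scalerBl scale1r addrAC (addrAC (T x)) subrr add0r addrC.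
  apply: le_trans (ler_normB _ _) _; rewrite !normrZ hTx0 mulr1 gtr0_norm //.
  have : t * `|f x| <= t * 1 by apply: ler_wpM2l; [exact: ltW | exact: le_trans (fle x) hx].
  have : t * `|T x| <= t * 1 by apply: ler_wpM2l; [exact: ltW | exact: le_trans (Tle x) hx].
  lra.
exists A; split.
  move=> eAT; apply: nr1 => x.
  have := congr1 (fun F => F x) eAT; rewrite /A /= => h.
  have : t *: (f x *: T x0) = t *: T x.
    apply/eqP; rewrite -subr_eq0; apply/eqP.
    have <- : (1 - t) *: T x + (t * f x) *: T x0 - T x = 0 by rewrite h subrr.
    by rewrite scalerBl scale1r scalerA addrAC (addrAC (T x)) subrr add0r addrC.
  by move/(scalerI (lt0r_neq0 t0))/esym.
apply: main => //; first by rewrite Ax0.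
move=> x n1 hAx; apply/eqP; rewrite eq_le; apply/andP; split.
  by rewrite -n1; exact: Tle.
have := Ale x; rewrite hAx n1 mulr1 => h.
have h2 : (1 - t) * 1 <= (1 - t) * `|T x| by lra.
by move: h2; rewrite ler_pM2l //; lra.
Qed.

Unset Implicit Arguments.
Set Strict Implicit.

Theorem theorem2p8 (R : realType) (X Y : normedModType R)
  (fdX : findim X) (fdY : findim Y) (dX : dim_gt1 X) (dY : dim_gt1 Y)
  (scX : strictly_convex X) (smY : smooth_space Y)
  (T : X -> Y) (linT : is_op T) (nT : opnorm T = 1) :
  op_smooth_point T <->
  (forall eps : R, 0 < eps ->
     exists A : X -> Y, A <> T /\ uniform_BPB_approx T A eps /\
                        op_smooth_point A).
Proof.
split.
  exact: (forward fdX dY smY linT nT).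
exact: (backward fdX smY linT nT).
Qed.
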